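(* Let $V$ be a finite set with positive element weights ($\vert A \vert$ = total weight of $A \subseteq V$), let $\mathcal{P}, \mathcal{P}'$ be partitions of $V$ into nonempty parts, and let $P_i', P_j' \in \mathcal{P}'$ be distinct. For $\mathcal{S} \subseteq \mathcal{P}$ define $$\phi^*_{i',j'}(\mathcal{S}) := \vert U_{\mathcal{S}} \cap P_j' \vert + \vert P_i' \vert - \vert U_{\mathcal{S}} \cap P_i' \vert + \sum_{P' \in \mathcal{P}' \setminus \{P_i', P_j'\}} \vert P' \vert \operatorname{peak}\Big(\frac{\vert U_{\mathcal{S}} \cap P' \vert}{\vert P' \vert}\Big).$$ Let $\mathcal{S}$ minimize $\phi^*_{i',j'}$ over all $\emptyset \ne \mathcal{S} \subsetneq \mathcal{P}$, and set $\mathcal{S}' := \{P_i'\} \cup \{P' \in \mathcal{P}' \setminus \{P_i', P_j'\} : \vert U_{\mathcal{S}} \cap P' \vert > \vert P' \vert/2\}$. Then $(\mathcal{S}, \mathcal{S}')$ is an optimal $C_{\wedge}$-correspondence under the constraint $P_i' \in \mathcal{S}'$ and $P_j' \in \mathcal{P}' \setminus \mathcal{S}'$, i.e. it minimizes $\vert U_{\mathcal{S}} \triangle U_{\mathcal{S}'} \vert$ among all pairs with $\emptyset \ne \mathcal{S} \subsetneq \mathcal{P}$, $\mathcal{S}' \subseteq \mathcal{P}'$, $P_i' \in \mathcal{S}'$, $P_j' \notin \mathcal{S}'$.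
   Context: $U_{\mathcal{S}}$ denotes the union of the sets in $\mathcal{S}$; $\triangle$ is symmetric difference; $\operatorname{peak}(x) = x$ for $x \le 1/2$ and $1 - x$ for $x > 1/2$. A $C_{\wedge}$-correspondence is a pair $(\mathcal{S}, \mathcal{S}')$ with $\mathcal{S} \subseteq \mathcal{P}$, $\mathcal{S}' \subseteq \mathcal{P}'$, $\mathcal{S} \notin \{\emptyset, \mathcal{P}\}$ and $\mathcal{S}' \notin \{\emptyset, \mathcal{P}'\}$ (automatic under the constraint above). *)

(* Defs.v *)
From mathcomp Require Import all_boot all_order all_algebra.
Set Implicit Arguments. Unset Strict Implicit. Unset Printing Implicit Defensive.
Import Order.TTheory GRing.Theory Num.Theory.
Local Open Scope ring_scope.

Definition wt (R : realFieldType) (V : finType) (w : V -> R) (A : {set V}) : R :=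
  \sum_(x in A) w x.

Definition peak (R : realFieldType) (x : R) : R :=
  if x <= 2^-1 then x else 1 - x.

Definition nonempty_partition (V : finType) (P : {set {set V}}) : Prop :=
  partition P [set: V] /\ set0 \notin P.

Definition phi_star (R : realFieldType) (V : finType) (w : V -> R)
  (P' : {set {set V}}) (Pi Pj : {set V}) (S : {set {set V}}) : R :=
  let U := cover S in
  wt w (U :&: Pj) + wt w Pi - wt w (U :&: Pi)
  + \sum_(Q in P' :\ Pi :\ Pj) wt w Q * peak (wt w (U :&: Q) / wt w Q).

Definition induced_S' (R : realFieldType) (V : finType) (w : V -> R)
  (P' : {set {set V}}) (Pi Pj : {set V}) (S : {set {set V}}) : {set {set V}} :=
  Pi |: [set Q in P' :\ Pi :\ Pj | wt w Q / 2%:R < wt w (cover S :&: Q)].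

Definition admissible (V : finType) (P P' : {set {set V}}) (Pi Pj : {set V})
  (T T' : {set {set V}}) : Prop :=
  [/\ T \subset P, T != set0, T != P, T' \subset P' & (Pi \in T') && (Pj \notin T')].

Definition symdiff (V : finType) (A B : {set V}) : {set V} := (A :\: B) :|: (B :\: A).

(* Main.v *)
Require Import Defs.
From mathcomp Require Import all_boot all_order all_algebra.
From mathcomp Require Import lra.
Import Order.TTheory GRing.Theory Num.Theory.
Local Open Scope ring_scope.

Section H.
Variables (R : realFieldType) (V : finType) (w : V -> R).

Definition fc (U Q : {set V}) (b : bool) : R :=
  \sum_(x in Q) (if (x \in U) != b then w x else 0).

Lemma wtI (U Q : {set V}) : wt w (U :&: Q) = \sum_(x in Q) (if x \in U then w x else 0).
Proof.
rewrite /wt -big_mkcondr; apply: eq_bigl => x; by rewrite in_setI andbC.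
Qed.

Lemma fc_false U Q : fc U Q false = wt w (U :&: Q).
Proof. rewrite wtI /fc; apply: eq_bigr => x _; by case: (x \in U). Qed.

Lemma fc_true U Q : fc U Q true = wt w Q - wt w (U :&: Q).
Proof.
rewrite wtI /fc /wt; apply/eqP; rewrite eq_sym subr_eq -big_split /=.
apply/eqP; apply: eq_bigr => x _; case: (x \in U) => /=; by rewrite ?add0r ?addr0.
Qed.

Lemma wt_ge0 (A : {set V}) : (forall x, 0 < w x) -> 0 <= wt w A.
Proof. move=> wp; apply: sumr_ge0 => x _; exact: ltW. Qed.

Lemma wt_gt0 (A : {set V}) : (forall x, 0 < w x) -> A != set0 -> 0 < wt w A.
Proof.
move=> wp /set0Pn [x xA]; rewrite /wt (bigD1 x) //=.
apply: lt_le_trans (wp x) _; rewrite lerDl; apply: sumr_ge0 => y _; exact: ltW.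
Qed.

Lemma wt_sub (A B : {set V}) : (forall x, 0 < w x) -> A \subset B -> wt w A <= wt w B.
Proof.
move=> wp sAB; rewrite /wt [X in _ <= X](big_setID A) /= setIC (setIidPl sAB).
rewrite lerDl; exact: wt_ge0.
Qed.

Lemma decomp (P' T' : {set {set V}}) (U : {set V}) :
  partition P' [set: V] -> T' \subset P' ->
  wt w (symdiff U (cover T')) = \sum_(Q in P') fc U Q (Q \in T').
Proof.
case/and3P => /eqP cov triv _ sT.
rewrite /wt big_mkcond /=.
rewrite (eq_bigl (fun x => x \in cover P')); last by move=> x; rewrite cov inE.
rewrite big_trivIset //.
apply: eq_bigr => Q QP; apply: eq_bigr => x xQ.
rewrite /symdiff !inE.
have -> : (x \in cover T') = (Q \in T').
  apply/bigcupP/idP => [[Q2 Q2T xQ2]|QT]; last by exists Q.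
  have := def_pblock triv (subsetP sT _ Q2T) xQ2.
  by rewrite (def_pblock triv QP xQ) => ->.
by case: (x \in U); case: (Q \in T').
Qed.

Lemma split3 (P' : {set {set V}}) Pi Pj (g : {set V} -> R) :
  Pi \in P' -> Pj \in P' -> Pi != Pj ->
  \sum_(Q in P') g Q = g Pi + g Pj + \sum_(Q in P' :\ Pi :\ Pj) g Q.
Proof.
move=> hi hj ne; rewrite (bigD1 Pi) //= (bigD1 Pj) /=; last by rewrite hj eq_sym.
rewrite addrA; congr (_ + _); apply: eq_bigl => Q; rewrite !inE.
by case: (Q \in P'); case: (Q != Pi); case: (Q != Pj).
Qed.

Lemma peak_bound (U Q : {set V}) b : (forall x, 0 < w x) -> Q != set0 ->
  wt w Q * peak (wt w (U :&: Q) / wt w Q) <= fc U Q b /\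
  (b = (wt w Q / 2%:R < wt w (U :&: Q)) ->
    fc U Q b = wt w Q * peak (wt w (U :&: Q) / wt w Q)).
Proof.
move=> wp Qn; have q0 := @wt_gt0 Q wp Qn.
set q := wt w Q; set a := wt w (U :&: Q).
have hle : (a / q <= 2^-1) = (a <= q / 2%:R).
  by rewrite ler_pdivrMr // mulrC.
rewrite /peak hle.
have e1 : q * (a / q) = a by rewrite mulrCA divff ?mulr1 // gt_eqF.
have e2 : q * (1 - a / q) = q - a by rewrite mulrBr mulr1 e1.
have ha : 0 <= a by apply: wt_ge0.
case: b; rewrite ?fc_true ?fc_false -/q -/a; case: ifP => h; rewrite ?e1 ?e2.
- split; first by (have := h; lra).
  by move=> E; move: E; rewrite ltNge h.
- by split.
- by split.
- split; last by move=> E; move: E; rewrite ltNge h.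
  move/negbT: h; rewrite -ltNge => h; lra.
Qed.

End H.
Arguments split3 {R V P' Pi Pj} g.
Arguments peak_bound {R V w} U Q b.

Theorem proposition9 (R : realFieldType) (V : finType) (w : V -> R)
  (P P' : {set {set V}}) (Pi Pj : {set V}) (S : {set {set V}}) :
  (forall x, 0 < w x) ->
  nonempty_partition P -> nonempty_partition P' ->
  Pi \in P' -> Pj \in P' -> Pi != Pj ->
  S \subset P -> S != set0 -> S != P ->
  (forall T : {set {set V}}, T \subset P -> T != set0 -> T != P ->
     phi_star w P' Pi Pj S <= phi_star w P' Pi Pj T) ->
  admissible P P' Pi Pj S (induced_S' w P' Pi Pj S) /\
  (forall T T' : {set {set V}}, admissible P P' Pi Pj T T' ->
     wt w (symdiff (cover S) (cover (induced_S' w P' Pi Pj S)))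
       <= wt w (symdiff (cover T) (cover T'))).
Proof.
move=> wp [pP n0P] [pP' n0P'] hi hj ne sS Sn SP opt.
have ne0 : forall Q, Q \in P' -> Q != set0.
  by move=> Q QP; apply/eqP => E; move: n0P'; rewrite -E QP.
set S0 := induced_S' w P' Pi Pj S.
have sS0 : S0 \subset P'.
  apply/subsetP => Q; rewrite !inE => /orP [/eqP -> //|/andP [/andP [_ /andP [_ ->]] _]] //.
have adm : admissible P P' Pi Pj S S0.
  split => //; rewrite !inE eqxx /= negb_or eq_sym ne /=.
  by rewrite eqxx.
split => // T T' [sT Tn TP sT' /andP [iT jT]].
rewrite (decomp _ _ _ _ _ _ pP' sS0) (decomp _ _ _ _ _ _ pP' sT') !(split3 _ hi hj ne).
rewrite iT (negbTE jT) !inE eqxx /= eq_sym (negbTE ne) /= eqxx /=.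
rewrite !fc_true !fc_false.
have LS : \sum_(Q in P' :\ Pi :\ Pj) fc R V w (cover S) Q (Q \in S0) =
  \sum_(Q in P' :\ Pi :\ Pj) wt w Q * peak (wt w (cover S :&: Q) / wt w Q).
  apply: eq_bigr => Q QP; have := QP; rewrite !inE => /andP [nj /andP [ni QP']].
  case: (peak_bound (cover S) Q (Q \in S0) wp (ne0 _ QP')) => _ E.
  have hb : (Q \in S0) = (wt w Q / 2%:R < wt w (cover S :&: Q)).
    by rewrite /S0 /induced_S' !inE (negbTE ni) /= nj QP'.
  by rewrite -(E hb) /S0 /induced_S' !inE.
have LT : \sum_(Q in P' :\ Pi :\ Pj) wt w Q * peak (wt w (cover T :&: Q) / wt w Q)
   <= \sum_(Q in P' :\ Pi :\ Pj) fc R V w (cover T) Q (Q \in T').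
  apply: ler_sum => Q; rewrite !inE => /andP [_ /andP [_ QP']].
  by case: (peak_bound (cover T) Q (Q \in T') wp (ne0 _ QP')).
have := opt T sT Tn TP; rewrite /phi_star LS.
move: LT; lra.
Qed.
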